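(* In the setting below, let $A\in\Lambda^1(M,\mathfrak g)$, $B\in\Lambda^2(M,\mathfrak h)$, with fake 2-curvature $\Omega_1=dA+\tfrac12[A,A]-\alpha(B)$ and 2-curvature $\Omega_2=dB+A\triangleright B$, and let $\mathrm{CS}_4(A,B)=\langle 2F-\alpha(B),B\rangle_{\mathfrak g,\mathfrak h}-d\langle A,B\rangle_{\mathfrak g,\mathfrak h}$ with $F=dA+\tfrac12[A,A]$ (equivalently $\mathrm{CS}_4=\langle\!\langle\mathcal A,\underline d\mathcal A+\tfrac13[\mathcal A,\mathcal A]\rangle\!\rangle$ for $\mathcal A=A+B\xi$, $k=-1$). Then $$d\,\mathrm{CS}_4(A,B)=2\langle\Omega_1,\Omega_2\rangle_{\mathfrak g,\mathfrak h}=\langle\!\langle\mathcal F,\mathcal F\rangle\!\rangle,\qquad\mathcal F=\Omega_1+\Omega_2\xi .$$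
   Context: Lie 2-algebra $\mathcal O=(\mathfrak h,\mathfrak g;\alpha,\triangleright)$ of a Lie crossed module $(H,G;\bar\alpha,\bar\triangleright)$: $\alpha:\mathfrak h\to\mathfrak g$, $\triangleright:\mathfrak g\to\mathrm{Der}(\mathfrak h)$ Lie homomorphisms, $\alpha(X\triangleright Y)=[X,\alpha(Y)]$, $\alpha(Y)\triangleright Y'=[Y,Y']$. A $G$-invariant pairing $\langle-,-\rangle_{\mathfrak g,\mathfrak h}:\mathfrak g\times\mathfrak h\to\mathbb R$ is non-degenerate bilinear with $\langle gXg^{-1},g\triangleright Y\rangle=\langle X,Y\rangle$, $\langle\alpha(Y_1),Y_2\rangle=\langle\alpha(Y_2),Y_1\rangle$, $\langle[X_1,X_2],Y\rangle=-\langle X_2,X_1\triangleright Y\rangle$; on a smooth manifold $M$ it extends to forms by $\langle A,B\rangle=A^a\wedge B^b\langle X_a,Y_b\rangle$, and $[\cdot,\cdot]$, $\triangleright$, $\alpha$, $d$ act componentwise on Lie-algebra-valued forms. Type $N=1$ generalized forms: $U+V\xi$ ($U\in\Lambda^p(M,\mathfrak g)$, $V\in\Lambda^{p+1}(M,\mathfrak h)$, $\xi$ formal of degree $-1$), with bracket $[\mathcal W_1,\mathcal W_2]=[U_1,U_2]+(U_1\triangleright V_2-(-1)^{pq}U_2\triangleright V_1)\xi$, derivative $\underline d(U+V\xi)=dU+(-1)^{p+1}k\alpha(V)+(dV)\xi$, and pairing $\langle\!\langle\mathcal W_1,\mathcal W_2\rangle\!\rangle=\langle U_1,V_2\rangle+(-1)^{pq}\langle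 U_2,V_1\rangle$ for degrees $p,q$. *)

(* Defs.v *)
From HB Require Import structures.
From mathcomp Require Import all_boot all_order all_algebra.
Set Implicit Arguments. Unset Strict Implicit. Unset Printing Implicit Defensive.
Import Order.TTheory GRing.Theory Num.Theory.
Local Open Scope ring_scope.

Section Defs.
Variable R : realFieldType.

(* Real-valued differential forms: a graded-commutative differential   *)
(* graded R-algebra (Om, deg, d); deg p x means "x is a p-form".        *)
Definition is_cdga (Om : algType R) (deg : nat -> Om -> Prop) (d : Om -> Om) : Prop :=
  (forall p, deg p 0) /\
      (forall p (a : R) x y, deg p x -> deg p y -> deg p (a *: x + y)) /\
      deg 0%N 1 /\
      (forall p q x y, deg p x -> deg q y -> deg (p + q)%N (x * y)) /\
      (forall p q x y, deg p x -> deg q y -> x * y = (-1) ^+ (p * q) *: (y * x)) /\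
      (forall (a : R) x y, d (a *: x + y) = a *: d x + d y) /\
      (forall p x, deg p x -> deg p.+1 (d x)) /\
      (forall p x y, deg p x -> d (x * y) = d x * y + (-1) ^+ p *: (x * d y)) /\
      (forall x, d (d x) = 0).

Definition linear_map (U V : lmodType R) (f : U -> V) : Prop :=
  forall (a : R) x y, f (a *: x + y) = a *: f x + f y.

Definition bilinear_map (U V W : lmodType R) (f : U -> V -> W) : Prop :=
  (forall (a : R) x x' y, f (a *: x + x') y = a *: f x y + f x' y) /\
  (forall (a : R) x y y', f x (a *: y + y') = a *: f x y + f x y').

Definition is_lie (L : lmodType R) (br : L -> L -> L) : Prop :=
  [/\ bilinear_map br, (forall x, br x x = 0)
    & (forall x y z, br x (br y z) + br y (br z x) + br z (br x y) = 0)].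

Definition is_lie2alg (g h : lmodType R) (brg : g -> g -> g) (brh : h -> h -> h)
    (al : h -> g) (act : g -> h -> h) : Prop :=
  is_lie brg /\ is_lie brh /\ linear_map al /\ bilinear_map act /\
      (forall y y', al (brh y y') = brg (al y) (al y')) /\
      (forall x y y', act x (brh y y') = brh (act x y) y' + brh y (act x y')) /\
      (forall x1 x2 y, act (brg x1 x2) y = act x1 (act x2 y) - act x2 (act x1 y)) /\
      (forall x y, al (act x y) = brg x (al y)) /\
      (forall y y', act (al y) y' = brh y y').

Definition is_inv_pairing (g h : lmodType R) (brg : g -> g -> g)
    (al : h -> g) (act : g -> h -> h) (pr : g -> h -> R) : Prop :=
  (forall (a : R) x x' y, pr (a *: x + x') y = a * pr x y + pr x' y) /\
      (forall (a : R) x y y', pr x (a *: y + y') = a * pr x y + pr x y') /\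
      (forall x, (forall y, pr x y = 0) -> x = 0) /\
      (forall y, (forall x, pr x y = 0) -> y = 0) /\
      (forall y1 y2, pr (al y1) y2 = pr (al y2) y1) /\
      (forall x1 x2 y, pr (brg x1 x2) y = - pr x2 (act x1 y)).

(* V-valued forms: finite sums  sum_i w_i (x) v_i, represented by the  *)
(* list of pairs (w_i, v_i).                                           *)
Section Forms.
Variable Om : algType R.

Definition vform (V : Type) := seq (Om * V).

Fixpoint all_deg (V : Type) (deg : nat -> Om -> Prop) (p : nat) (U : vform V) : Prop :=
  match U with [::] => True | z :: U' => deg p z.1 /\ all_deg deg p U' end.

Definition fop (V1 V2 V3 : Type) (op : V1 -> V2 -> V3) (U : vform V1) (W : vform V2)
  : vform V3 := [seq (u.1 * w.1, op u.2 w.2) | u <- U, w <- W].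

Definition fmap (V1 V2 : Type) (f : V1 -> V2) (U : vform V1) : vform V2 :=
  [seq (u.1, f u.2) | u <- U].

Definition fd (V : Type) (d : Om -> Om) (U : vform V) : vform V :=
  [seq (d u.1, u.2) | u <- U].

Definition fscale (V : Type) (c : R) (U : vform V) : vform V :=
  [seq (c *: u.1, u.2) | u <- U].

Definition fadd (V : Type) (U W : vform V) : vform V := U ++ W.

Definition fpair (V1 V2 : Type) (pr : V1 -> V2 -> R) (U : vform V1) (W : vform V2) : Om :=
  \sum_(u <- U) \sum_(w <- W) pr u.2 w.2 *: (u.1 * w.1).

(* Type N=1 generalized forms  U + V xi, stored as the pair (U, V);    *)
(* the degree p is passed explicitly to the operations.               *)
Variables (g h : Type) (brg : g -> g -> g) (al : h -> g) (act : g -> h -> h)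
  (pr : g -> h -> R) (d : Om -> Om).

Definition genform := (vform g * vform h)%type.

Definition gadd (W1 W2 : genform) : genform := (fadd W1.1 W2.1, fadd W1.2 W2.2).
Definition gscale (c : R) (W : genform) : genform := (fscale c W.1, fscale c W.2).

Definition gbr (p q : nat) (W1 W2 : genform) : genform :=
  (fop brg W1.1 W2.1,
   fadd (fop act W1.1 W2.2) (fscale (- (-1) ^+ (p * q)) (fop act W2.1 W1.2))).

Definition gd (k : R) (p : nat) (W : genform) : genform :=
  (fadd (fd d W.1) (fscale ((-1) ^+ p.+1 * k) (fmap al W.2)), fd d W.2).

Definition gpair (p q : nat) (W1 W2 : genform) : Om :=
  fpair pr W1.1 W2.2 + (-1) ^+ (p * q) *: fpair pr W2.1 W1.2.

End Forms.
End Defs.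

(* Main.v *)
Require Import Defs.
From mathcomp Require Import all_boot all_order all_algebra ring.
Import GRing.Theory.
Local Open Scope ring_scope.
Section LC.
Variable R : realFieldType.
Variable V : lmodType R.
Definition lc (x1 x2 x3 x4 : V) (a1 a2 a3 a4 : R) := a1 *: x1 + a2 *: x2 + a3 *: x3 + a4 *: x4.
Lemma lcD x1 x2 x3 x4 a1 a2 a3 a4 b1 b2 b3 b4 :
  lc x1 x2 x3 x4 a1 a2 a3 a4 + lc x1 x2 x3 x4 b1 b2 b3 b4 = lc x1 x2 x3 x4 (a1 + b1) (a2 + b2) (a3 + b3) (a4 + b4).
Proof. by rewrite /lc !scalerDl addrACA; congr (_ + _); rewrite addrACA; congr (_ + _); rewrite addrACA. Qed.
Lemma lcN x1 x2 x3 x4 a1 a2 a3 a4 :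
  - lc x1 x2 x3 x4 a1 a2 a3 a4 = lc x1 x2 x3 x4 (- a1) (- a2) (- a3) (- a4).
Proof. by rewrite /lc !opprD !scaleNr. Qed.
Lemma lcZ x1 x2 x3 x4 c a1 a2 a3 a4 :
  c *: lc x1 x2 x3 x4 a1 a2 a3 a4 = lc x1 x2 x3 x4 (c * a1) (c * a2) (c * a3) (c * a4).
Proof. by rewrite /lc !scalerDr !scalerA. Qed.
Lemma lc1 x1 x2 x3 x4 : x1 = lc x1 x2 x3 x4 1 0 0 0.
Proof. by rewrite /lc !scale0r !addr0 scale1r. Qed.
Lemma lc2 x1 x2 x3 x4 : x2 = lc x1 x2 x3 x4 0 1 0 0.
Proof. by rewrite /lc !scale0r addr0 add0r addr0 scale1r. Qed.
Lemma lc3 x1 x2 x3 x4 : x3 = lc x1 x2 x3 x4 0 0 1 0.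
Proof. by rewrite /lc !scale0r addr0 !add0r scale1r. Qed.
Lemma lc4 x1 x2 x3 x4 : x4 = lc x1 x2 x3 x4 0 0 0 1.
Proof. by rewrite /lc !scale0r !add0r scale1r. Qed.
Lemma lc0 x1 x2 x3 x4 : 0 = lc x1 x2 x3 x4 0 0 0 0.
Proof. by rewrite /lc !scale0r !add0r. Qed.
Lemma lc_subst (Pr : V -> V -> V -> V -> Prop) x1 x2 x3 x4 :
  Pr (lc x1 x2 x3 x4 1 0 0 0) (lc x1 x2 x3 x4 0 1 0 0) (lc x1 x2 x3 x4 0 0 1 0)
     (lc x1 x2 x3 x4 0 0 0 1) -> Pr x1 x2 x3 x4.
Proof. by rewrite -lc1 -lc2 -lc3 -lc4. Qed.
End LC.


Section Pf.
Variable R : realFieldType.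
Variables (Om : algType R) (deg : nat -> Om -> Prop) (d : Om -> Om)
  (g h : lmodType R) (brg : g -> g -> g) (brh : h -> h -> h)
  (al : h -> g) (act : g -> h -> h) (pr : g -> h -> R).
Hypotheses (HOm : is_cdga deg d) (HL : is_lie2alg brg brh al act)
  (Hpr : is_inv_pairing brg al act pr).

Lemma degM p q x y : deg p x -> deg q y -> deg (p + q)%N (x * y).
Proof. by case: HOm => [_ [_ [_ [H _]]]]; apply: H. Qed.
Lemma comm p q x y : deg p x -> deg q y -> x * y = (-1) ^+ (p * q) *: (y * x).
Proof. by case: HOm => [_ [_ [_ [_ [H _]]]]]; apply: H. Qed.
Lemma dZD a x y : d (a *: x + y) = a *: d x + d y.
Proof. by case: HOm => [_ [_ [_ [_ [_ [H _]]]]]]; apply: H. Qed.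
Lemma ddeg p x : deg p x -> deg p.+1 (d x).
Proof. by case: HOm => [_ [_ [_ [_ [_ [_ [H _]]]]]]]; apply: H. Qed.
Lemma dM p x y : deg p x -> d (x * y) = d x * y + (-1) ^+ p *: (x * d y).
Proof. by case: HOm => [_ [_ [_ [_ [_ [_ [_ [H _]]]]]]]]; apply: H. Qed.
Lemma dd x : d (d x) = 0.
Proof. by case: HOm => [_ [_ [_ [_ [_ [_ [_ [_ H]]]]]]]]; apply: H. Qed.

Lemma d0 : d 0 = 0.
Proof. have := dZD 1 0 0; rewrite !scale1r addr0 => E.
by have := congr1 (fun z => z - d 0) E; rewrite /= addrK subrr => /esym. Qed.
Lemma dD x y : d (x + y) = d x + d y.
Proof. by rewrite -{1}(scale1r x) dZD scale1r. Qed.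
Lemma dZ a x : d (a *: x) = a *: d x.
Proof. by rewrite -(addr0 (a *: x)) dZD d0 addr0. Qed.
Lemma dN x : d (- x) = - d x.
Proof. by rewrite -scaleN1r dZ scaleN1r. Qed.
Lemma d_sum (I : Type) (s : seq I) (F : I -> Om) :
  d (\sum_(i <- s) F i) = \sum_(i <- s) d (F i).
Proof. by elim: s => [|i s IH]; rewrite ?big_nil ?d0 // !big_cons dD IH. Qed.

Lemma brgD : bilinear_map brg. Proof. by case: HL => [[]]. Qed.
Lemma brgDl x x' y : brg (x + x') y = brg x y + brg x' y.
Proof. by case: brgD => Hl _; rewrite -{1}(scale1r x) Hl scale1r. Qed.
Lemma brgDr x y y' : brg x (y + y') = brg x y + brg x y'.
Proof. by case: brgD => _ Hr; rewrite -{1}(scale1r y) Hr scale1r. Qed.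
Lemma brg_anti x y : brg x y = - brg y x.
Proof.
case: HL => [[_ H0 _] _].
have := H0 (x + y); rewrite brgDl !brgDr !H0 add0r addr0 => /eqP.
by rewrite addr_eq0 => /eqP.
Qed.
Lemma brg_jacobi x y z : brg x (brg y z) + brg y (brg z x) + brg z (brg x y) = 0.
Proof. by case: HL => [[_ _ H] _]. Qed.
Lemma al_act x y : al (act x y) = brg x (al y).
Proof. by case: HL => [_ [_ [_ [_ [_ [_ [_ [H _]]]]]]]]. Qed.

Lemma prDl a x x' y : pr (a *: x + x') y = a * pr x y + pr x' y.
Proof. by case: Hpr => [H _]. Qed.
Lemma pr0l y : pr 0 y = 0.
Proof. have := prDl 1 0 0 y; rewrite scale1r addr0 mul1r => E.
by have := congr1 (fun z => z - pr 0 y) E; rewrite /= addrK subrr => /esym. Qed.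
Lemma prNl x y : pr (- x) y = - pr x y.
Proof. by rewrite -(addr0 (- x)) -scaleN1r prDl mulN1r pr0l addr0. Qed.
Lemma prDl3 x y z w : pr (x + y + z) w = pr x w + pr y w + pr z w.
Proof. by rewrite -(scale1r (x + y)) prDl mul1r -(scale1r x) prDl mul1r scale1r. Qed.
Lemma pr_al y1 y2 : pr (al y1) y2 = pr (al y2) y1.
Proof. by case: Hpr => [_ [_ [_ [_ [H _]]]]]. Qed.
Lemma pr_inv x1 x2 y : pr (brg x1 x2) y = - pr x2 (act x1 y).
Proof. by case: Hpr => [_ [_ [_ [_ [_ H]]]]]. Qed.
Lemma pr_br x y z : pr (brg x y) z = pr x (act y z).
Proof. by rewrite brg_anti prNl pr_inv opprK. Qed.
Lemma pr_al_act y x y' : pr (al y) (act x y') = - pr (al y') (act x y).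
Proof. by have := pr_inv x (al y) y'; rewrite -al_act pr_al => ->; rewrite opprK. Qed.

Lemma sgn_even n : ~~ odd n -> (-1) ^+ n = 1 :> R.
Proof. by rewrite -signr_odd => /negbTE ->. Qed.
Lemma comm12 x y : deg 1 x -> deg 2 y -> x * y = y * x.
Proof. by move=> Hx Hy; rewrite (comm _ _ _ _ Hx Hy) sgn_even ?scale1r. Qed.
Lemma comm11 x y : deg 1 x -> deg 1 y -> x * y = - (y * x).
Proof. by move=> Hx Hy; rewrite (comm _ _ _ _ Hx Hy) expr1 scaleN1r. Qed.
Lemma comm22 x y : deg 2 x -> deg 2 y -> x * y = y * x.
Proof. by move=> Hx Hy; rewrite (comm _ _ _ _ Hx Hy) sgn_even ?scale1r. Qed.
Lemma comm32 x y : deg 3 x -> deg 2 y -> x * y = y * x.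
Proof. by move=> Hx Hy; rewrite (comm _ _ _ _ Hx Hy) sgn_even ?scale1r. Qed.

Lemma eq_bigd (V : Type) p (U : vform Om V) (F G : Om * V -> Om) :
  all_deg deg p U -> (forall u, deg p u.1 -> F u = G u) ->
  \sum_(u <- U) F u = \sum_(u <- U) G u.
Proof.
elim: U => [|u U IH] /=; first by rewrite !big_nil.
by case=> Hu HU E; rewrite !big_cons E // IH.
Qed.

Lemma sum3D (I J K : Type) (s1 : seq I) (s2 : seq J) (s3 : seq K) (F G : I -> J -> K -> Om) :
  \sum_(i <- s1) \sum_(j <- s2) \sum_(k <- s3) (F i j k + G i j k) =
  \sum_(i <- s1) \sum_(j <- s2) \sum_(k <- s3) F i j k +
  \sum_(i <- s1) \sum_(j <- s2) \sum_(k <- s3) G i j k.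
Proof.
rewrite -big_split; apply: eq_bigr => i _; rewrite -big_split; apply: eq_bigr => j _.
by rewrite -big_split.
Qed.
Lemma sum3N (I J K : Type) (s1 : seq I) (s2 : seq J) (s3 : seq K) (F : I -> J -> K -> Om) :
  \sum_(i <- s1) \sum_(j <- s2) \sum_(k <- s3) (- F i j k) =
  - \sum_(i <- s1) \sum_(j <- s2) \sum_(k <- s3) F i j k.
Proof.
rewrite -sumrN; apply: eq_bigr => i _; rewrite -sumrN; apply: eq_bigr => j _.
by rewrite -sumrN.
Qed.

Lemma fpair_addl (U1 U2 : vform Om g) (W : vform Om h) :
  fpair pr (fadd U1 U2) W = fpair pr U1 W + fpair pr U2 W.
Proof. by rewrite /fpair /fadd big_cat. Qed.
Lemma fpair_addr (U : vform Om g) (W1 W2 : vform Om h) :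
  fpair pr U (fadd W1 W2) = fpair pr U W1 + fpair pr U W2.
Proof. by rewrite /fpair -big_split; apply: eq_bigr => u _; rewrite /fadd big_cat. Qed.
Lemma fpair_scalel c (U : vform Om g) (W : vform Om h) :
  fpair pr (fscale c U) W = c *: fpair pr U W.
Proof.
rewrite /fpair /fscale big_map scaler_sumr; apply: eq_bigr => u _.
rewrite scaler_sumr; apply: eq_bigr => w _ /=.
by rewrite -scalerAl !scalerA mulrC.
Qed.
Lemma fpair_scaler c (U : vform Om g) (W : vform Om h) :
  fpair pr U (fscale c W) = c *: fpair pr U W.
Proof.
rewrite /fpair scaler_sumr; apply: eq_bigr => u _.
rewrite /fscale big_map scaler_sumr; apply: eq_bigr => w _ /=.
by rewrite -scalerAr !scalerA mulrC.
Qed.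

Lemma e_fopl (op : g -> g -> g) (U1 U2 : vform Om g) (W : vform Om h) :
  fpair pr (fop op U1 U2) W = \sum_(u1 <- U1) \sum_(u2 <- U2) \sum_(w <- W)
     pr (op u1.2 u2.2) w.2 *: (u1.1 * u2.1 * w.1).
Proof. by rewrite /fpair /fop big_allpairs_dep. Qed.
Lemma e_fopr (op : g -> h -> h) (U : vform Om g) (W1 : vform Om g) (W2 : vform Om h) :
  fpair pr U (fop op W1 W2) = \sum_(u <- U) \sum_(w1 <- W1) \sum_(w2 <- W2)
     pr u.2 (op w1.2 w2.2) *: (u.1 * (w1.1 * w2.1)).
Proof. by rewrite /fpair; apply: eq_bigr => u _; rewrite /fop big_allpairs_dep. Qed.

Lemma sum2D (I J : Type) (s1 : seq I) (s2 : seq J) (F G : I -> J -> Om) :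
  \sum_(i <- s1) \sum_(j <- s2) (F i j + G i j) =
  \sum_(i <- s1) \sum_(j <- s2) F i j + \sum_(i <- s1) \sum_(j <- s2) G i j.
Proof. by rewrite -big_split; apply: eq_bigr => i _; rewrite -big_split. Qed.

Lemma rot3 (I : Type) (s : seq I) (F : I -> I -> I -> Om) :
  \sum_(x <- s) \sum_(y <- s) \sum_(z <- s) F x y z =
  \sum_(x <- s) \sum_(y <- s) \sum_(z <- s) F y z x.
Proof.
rewrite [RHS]exchange_big; apply: eq_bigr => y _.
by rewrite exchange_big.
Qed.

Lemma nat_kill (n : nat) (x : Om) : x *+ n.+1 = 0 -> x = 0.
Proof.
move=> E; have : (n.+1%:R : R) *: x = 0 by rewrite scaler_nat.
by move/eqP; rewrite scaler_eq0 Num.Theory.pnatr_eq0 /= => /eqP.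
Qed.

Variables (A : vform Om g) (B : vform Om h).
Hypotheses (HA : all_deg deg 1 A) (HB : all_deg deg 2 B).

Lemma dP1 : d (fpair pr (fd d A) B) = fpair pr (fd d A) (fd d B).
Proof.
rewrite /fpair /fd !big_map d_sum; apply: (eq_bigd _ _ _ _ _ HA) => u Hu /=.
rewrite d_sum big_map; apply: eq_bigr => w _ /=.
by rewrite dZ (dM _ _ _ (ddeg _ _ Hu)) dd mul0r add0r sgn_even // scale1r.
Qed.

Lemma eQ12 : fpair pr (fd d A) (fop act A B) = \sum_(u1 <- A) \sum_(u2 <- A) \sum_(w <- B)
   pr u1.2 (act u2.2 w.2) *: (d u1.1 * (u2.1 * w.1)).
Proof. by rewrite e_fopr /fd big_map. Qed.
Lemma eQ21 : fpair pr (fop brg A A) (fd d B) = \sum_(u1 <- A) \sum_(u2 <- A) \sum_(w <- B)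
   pr (brg u1.2 u2.2) w.2 *: (u1.1 * u2.1 * d w.1).
Proof.
rewrite e_fopl; apply: eq_bigr => u1 _; apply: eq_bigr => u2 _.
by rewrite /fd big_map.
Qed.

Lemma dP2 : d (fpair pr (fop brg A A) B) =
  2 *: fpair pr (fd d A) (fop act A B) + fpair pr (fop brg A A) (fd d B).
Proof.
rewrite e_fopl d_sum.
transitivity (\sum_(u1 <- A) \sum_(u2 <- A) \sum_(w <- B)
   (pr (brg u1.2 u2.2) w.2 *: (d u1.1 * u2.1 * w.1)
    + - (pr (brg u1.2 u2.2) w.2 *: (u1.1 * d u2.1 * w.1))
    + pr (brg u1.2 u2.2) w.2 *: (u1.1 * u2.1 * d w.1))).
  apply: (eq_bigd _ _ _ _ _ HA) => u1 H1; rewrite d_sum.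
  apply: (eq_bigd _ _ _ _ _ HA) => u2 H2; rewrite d_sum.
  apply: eq_bigr => w _.
  rewrite dZ (dM _ _ _ (degM _ _ _ _ H1 H2)) (dM _ _ _ H1) (sgn_even (1+1)%N) // scale1r.
  by rewrite expr1 scaleN1r mulrDl mulNr !scalerDr scalerN.
rewrite !sum3D eQ12 eQ21; congr (_ + _).
rewrite scaler_nat mulr2n; congr (_ + _).
  by apply: eq_bigr => u1 _; apply: eq_bigr => u2 _; apply: eq_bigr => w _; rewrite pr_br mulrA.
rewrite exchange_big /=.
apply: (eq_bigd _ _ _ _ _ HA) => u1 H1; apply: (eq_bigd _ _ _ _ _ HA) => u2 H2.
apply: eq_bigr => w _.
rewrite brg_anti prNl scaleNr opprK pr_br (comm12 _ _ H2 (ddeg _ _ H1)) -mulrA.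
by [].
Qed.

Lemma eQ31 : fpair pr (fmap al B) (fd d B) = \sum_(u <- B) \sum_(v <- B)
   pr (al u.2) v.2 *: (u.1 * d v.1).
Proof. by rewrite /fpair /fmap big_map; apply: eq_bigr => u _; rewrite /fd big_map. Qed.

Lemma dP3 : d (fpair pr (fmap al B) B) = 2 *: fpair pr (fmap al B) (fd d B).
Proof.
rewrite /fpair /fmap big_map d_sum.
transitivity (\sum_(u <- B) \sum_(v <- B)
   (pr (al u.2) v.2 *: (d u.1 * v.1) + pr (al u.2) v.2 *: (u.1 * d v.1))).
  apply: (eq_bigd _ _ _ _ _ HB) => u Hu; rewrite d_sum.
  apply: eq_bigr => v _ /=.
  by rewrite dZ (dM _ _ _ Hu) sgn_even // scale1r scalerDr.
rewrite sum2D -/(fpair pr _ _) -[fpair _ _ _]/(fpair pr (fmap al B) (fd d B)) eQ31.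
rewrite scaler_nat mulr2n; congr (_ + _).
rewrite exchange_big /=.
apply: (eq_bigd _ _ _ _ _ HB) => u Hu; apply: (eq_bigd _ _ _ _ _ HB) => v Hv.
by rewrite pr_al (comm32 _ _ (ddeg _ _ Hv) Hu).
Qed.

Lemma half_kill (x : Om) : x = - x -> x = 0.
Proof. by move=> E; apply: (nat_kill 1); rewrite mulr2n {1}E addNr. Qed.

Lemma Q32 : fpair pr (fmap al B) (fop act A B) = 0.
Proof.
rewrite e_fopr /fmap big_map /=.
under eq_bigr => b _ do rewrite exchange_big.
apply: half_kill.
rewrite {1}exchange_big /= -sumrN.
apply: (eq_bigd _ _ _ _ _ HB) => u Hu; rewrite -sumrN.
apply: (eq_bigd _ _ _ _ _ HB) => v Hv; rewrite -sumrN.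
apply: (eq_bigd _ _ _ _ _ HA) => a Ha.
rewrite pr_al_act scaleNr; congr (- (_ *: _)).
rewrite -(comm32 _ _ (degM _ _ _ _ Ha Hu) Hv) -mulrA (comm22 _ _ Hu Hv) mulrA.
by rewrite (comm32 _ _ (degM _ _ _ _ Ha Hv) Hu).
Qed.

Lemma Q22 : fpair pr (fop brg A A) (fop act A B) = 0.
Proof.
rewrite e_fopl.
transitivity (- \sum_(x <- A) \sum_(y <- A) \sum_(z <- A) \sum_(b <- B)
   pr (brg z.2 (brg x.2 y.2)) b.2 *: (x.1 * y.1 * z.1 * b.1)).
  rewrite -sum3N; apply: eq_bigr => x _; apply: eq_bigr => y _.
  rewrite /fop big_allpairs_dep; apply: eq_bigr => z _; rewrite -sumrN.
  by apply: eq_bigr => b _ /=; rewrite (pr_inv z.2 (brg x.2 y.2) b.2) scaleNr opprK mulrA.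
set S1 := \sum_(x <- A) _.
have E12 : S1 = \sum_(x <- A) \sum_(y <- A) \sum_(z <- A) \sum_(b <- B)
   pr (brg x.2 (brg y.2 z.2)) b.2 *: (x.1 * y.1 * z.1 * b.1).
  rewrite /S1 rot3.
  apply: (eq_bigd _ _ _ _ _ HA) => x Hx; apply: (eq_bigd _ _ _ _ _ HA) => y Hy.
  apply: (eq_bigd _ _ _ _ _ HA) => z Hz; apply: eq_bigr => b _.
  by rewrite -(comm12 _ _ Hx (degM _ _ _ _ Hy Hz)) !mulrA.
have E23 : S1 = \sum_(x <- A) \sum_(y <- A) \sum_(z <- A) \sum_(b <- B)
   pr (brg y.2 (brg z.2 x.2)) b.2 *: (x.1 * y.1 * z.1 * b.1).
  rewrite E12 rot3.
  apply: (eq_bigd _ _ _ _ _ HA) => x Hx; apply: (eq_bigd _ _ _ _ _ HA) => y Hy.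
  apply: (eq_bigd _ _ _ _ _ HA) => z Hz; apply: eq_bigr => b _.
  by rewrite -(comm12 _ _ Hx (degM _ _ _ _ Hy Hz)) !mulrA.
suff -> : S1 = 0 by rewrite oppr0.
apply: (nat_kill 2).
rewrite mulrSr mulr2n {2}E12 {2}E23 /S1 -!sum3D.
apply: big1 => x _; apply: big1 => y _; apply: big1 => z _.
rewrite -!big_split; apply: big1 => b _ /=.
by rewrite -!scalerDl -prDl3 brg_jacobi pr0l scale0r.
Qed.

Lemma dAB : d (fpair pr A B) = fpair pr (fd d A) B - fpair pr A (fd d B).
Proof.
rewrite /fpair /fd big_map d_sum -sumrB; apply: (eq_bigd _ _ _ _ _ HA) => u Hu /=.
rewrite d_sum big_map -sumrB; apply: eq_bigr => w _ /=.
by rewrite dZ (dM _ _ _ Hu) expr1 scaleN1r scalerDr scalerN.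
Qed.

Lemma R1P2 : fpair pr A (fop act A B) = fpair pr (fop brg A A) B.
Proof.
rewrite e_fopr e_fopl; apply: eq_bigr => x _; apply: eq_bigr => y _; apply: eq_bigr => b _.
by rewrite pr_br mulrA.
Qed.

Lemma main_sec :
  let F := fadd (fd d A) (fscale (1 / 2) (fop brg A A)) in
  let Omega1 := fadd F (fscale (-1) (fmap al B)) in
  let Omega2 := fadd (fd d B) (fop act A B) in
  let CS4 := fpair pr (fadd (fscale 2 F) (fscale (-1) (fmap al B))) B
             - d (fpair pr A B) in
  let cA : genform Om g h := (A, B) in
  let cF : genform Om g h := (Omega1, Omega2) in
  [/\ CS4 = gpair pr 1 2 cA
              (gadd (gd al d (-1) 1 cA) (gscale (1 / 3) (gbr brg act 1 1 cA cA))),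
      d CS4 = 2 *: fpair pr Omega1 Omega2
    & 2 *: fpair pr Omega1 Omega2 = gpair pr 2 2 cF cF].
Proof.
move=> F O1 O2 CS cA cF; split.
- rewrite /CS /cA /F /gpair /gadd /gd /gscale /gbr /=.
  rewrite !(fpair_addl, fpair_addr, fpair_scalel, fpair_scaler) dAB R1P2.
  set P1 := fpair pr (fd d A) B; set P2 := fpair pr (fop brg A A) B.
  set P3 := fpair pr (fmap al B) B; set S := fpair pr A (fd d B).
  clearbody P1 P2 P3 S; pattern P1, P2, P3, S; apply: lc_subst.
  rewrite !(lcD, lcN, lcZ); by congr lc; rewrite ?mul1n; field.
- rewrite /CS /O1 /O2 /F.
  rewrite !(fpair_addl, fpair_addr, fpair_scalel) Q22 Q32.
  rewrite !(dD, dN, dZ) dd dP1 dP2 dP3 !scaler0 !addr0 oppr0 addr0.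
  set Q11 := fpair pr (fd d A) (fd d B); set Q12 := fpair pr (fd d A) (fop act A B).
  set Q21 := fpair pr (fop brg A A) (fd d B); set Q31 := fpair pr (fmap al B) (fd d B).
  clearbody Q11 Q12 Q21 Q31; pattern Q11, Q12, Q21, Q31; apply: lc_subst.
  by rewrite !(lcD, lcN, lcZ); congr lc; field.
- by rewrite /gpair /cF /= (sgn_even (2*2)%N) // scale1r scaler_nat mulr2n.
Qed.

End Pf.

Theorem mainTheorem8
  (R : realFieldType)
  (Om : algType R) (deg : nat -> Om -> Prop) (d : Om -> Om)
  (g h : lmodType R) (brg : g -> g -> g) (brh : h -> h -> h)
  (al : h -> g) (act : g -> h -> h) (pr : g -> h -> R)
  (HOm : is_cdga deg d)
  (HL : is_lie2alg brg brh al act)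
  (Hpr : is_inv_pairing brg al act pr)
  (A : vform Om g) (B : vform Om h)
  (HA : all_deg deg 1 A) (HB : all_deg deg 2 B) :
  let F := fadd (fd d A) (fscale (1 / 2) (fop brg A A)) in
  let Omega1 := fadd F (fscale (-1) (fmap al B)) in
  let Omega2 := fadd (fd d B) (fop act A B) in
  let CS4 := fpair pr (fadd (fscale 2 F) (fscale (-1) (fmap al B))) B
             - d (fpair pr A B) in
  let cA : genform Om g h := (A, B) in
  let cF : genform Om g h := (Omega1, Omega2) in
  [/\ CS4 = gpair pr 1 2 cA
              (gadd (gd al d (-1) 1 cA) (gscale (1 / 3) (gbr brg act 1 1 cA cA))),
      d CS4 = 2 *: fpair pr Omega1 Omega2
    & 2 *: fpair pr Omega1 Omega2 = gpair pr 2 2 cF cF].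
Proof. exact: (@main_sec R Om deg d g h brg brh al act pr HOm HL Hpr A B HA HB). Qed.
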